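(* Let $S=s_1,\ldots,s_n$ be a sequence of nonnegative integers, $\gamma>0$, $k$ a positive integer, $\epsilon>0$, and let $L$ be a level sequence. Let $0<\alpha<1$ and $0<\beta<1$, and let $\alpha',\beta'$ satisfy $\alpha^{1+\epsilon}\le\alpha'\le\alpha$ and $\beta^{1+\epsilon}\le\beta'\le\beta$. Then \[ \mathrm{score}_{\mathrm{geo}}(L,S;\alpha',\beta',\gamma)\le(1+\epsilon)\,\mathrm{score}_{\mathrm{geo}}(L,S;\alpha,\beta,\gamma). \]
   Context: A level sequence is $L=\ell_1,\ldots,\ell_n$ of integers with $0\le\ell_i\le k$; set $\ell_0=0$. The penalty is $\mathrm{pen}(x,y)=\max(y-x,0)\,\gamma\log n$. The geometric distribution is $p_{\mathrm{geo}}(s;\lambda)=(1-\lambda)\lambda^s$. $\mathrm{score}_{\mathrm{geo}}(L,S;\alpha,\beta,\gamma)=\sum_{i=1}^n\big[-\log p_{\mathrm{geo}}(s_i;\beta\alpha^{\ell_i})+\mathrm{pen}(\ell_{i-1},\ell_i)\big]$. *)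

(* Defs.v *)
From Stdlib Require Import Reals List.
Import ListNotations.
Open Scope R_scope.

Definition p_geo (s : nat) (lam : R) : R := (1 - lam) * lam ^ s.

Definition pen (n : nat) (gamma : R) (x y : nat) : R :=
  Rmax (INR y - INR x) 0 * gamma * ln (INR n).

(* Level sequence L = l_1..l_n given as a function on indices 1..n,
   with the convention l_0 = 0 (the value L 0 is ignored). *)
Definition lvl (L : nat -> nat) (i : nat) : nat :=
  match i with O => O | _ => L i end.

Definition score_geo (n : nat) (L S : nat -> nat) (alpha beta gamma : R) : R :=
  fold_right Rplus 0
    (map (fun i => - ln (p_geo (S i) (beta * alpha ^ (lvl L i)))
                   + pen n gamma (lvl L (i - 1)) (lvl L i))
         (seq 1 n)).

Definition level_seq (n k : nat) (L : nat -> nat) : Prop :=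
  forall i, (1 <= i <= n)%nat -> (L i <= k)%nat.

(* Main.v *)
Require Import Defs.
From Stdlib Require Import Reals Lra Lia List.
Import ListNotations.
Open Scope R_scope.

Lemma ln_le_h x y : 0 < x -> x <= y -> ln x <= ln y.
Proof. intros Hx [H|H]. left; now apply ln_increasing. subst; lra. Qed.

Lemma ln_nonpos x : 0 < x -> x <= 1 -> ln x <= 0.
Proof. intros Hx H. rewrite <- ln_1. now apply ln_le_h. Qed.

Lemma sum_le (f g : nat -> R) (c : R) (l : list nat) :
  (forall i, In i l -> f i <= c * g i) ->
  fold_right Rplus 0 (map f l) <= c * fold_right Rplus 0 (map g l).
Proof.
  induction l as [|a l IH]; simpl; intros H.
  - lra.
  - assert (H1 := H a (or_introl eq_refl)).
    assert (H2 : fold_right Rplus 0 (map f l) <= c * fold_right Rplus 0 (map g l)).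
    { apply IH; intros; apply H; auto. }
    lra.
Qed.

Lemma term_le (s m : nat) (eps alpha beta alpha' beta' : R) :
  0 < eps -> 0 < alpha < 1 -> 0 < beta < 1 ->
  Rpower alpha (1 + eps) <= alpha' <= alpha ->
  Rpower beta (1 + eps) <= beta' <= beta ->
  - ln (p_geo s (beta' * alpha' ^ m)) <= (1 + eps) * - ln (p_geo s (beta * alpha ^ m)).
Proof.
  intros He Ha Hb Ha' Hb'.
  assert (pa : 0 < Rpower alpha (1+eps)) by (unfold Rpower; apply exp_pos).
  assert (pb : 0 < Rpower beta (1+eps)) by (unfold Rpower; apply exp_pos).
  assert (a'p : 0 < alpha') by lra.
  assert (b'p : 0 < beta') by lra.
  assert (am : 0 < alpha ^ m) by (apply pow_lt; lra).
  assert (am' : 0 < alpha' ^ m) by (apply pow_lt; lra).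
  assert (am1 : alpha ^ m <= 1) by (rewrite <- (pow1 m); apply pow_incr; lra).
  assert (amle : alpha' ^ m <= alpha ^ m) by (apply pow_incr; lra).
  assert (lam : 0 < beta * alpha ^ m) by (apply Rmult_lt_0_compat; lra).
  assert (lam' : 0 < beta' * alpha' ^ m) by (apply Rmult_lt_0_compat; lra).
  assert (laml : beta * alpha ^ m < 1).
  { assert (beta * alpha ^ m <= beta * 1) by (apply Rmult_le_compat_l; lra). lra. }
  assert (lamle : beta' * alpha' ^ m <= beta * alpha ^ m).
  { apply Rmult_le_compat; lra. }
  unfold p_geo.
  rewrite !ln_mult by (try apply pow_lt; lra).
  rewrite !ln_pow by lra.
  rewrite !ln_mult by lra.
  rewrite !ln_pow by lra.
  assert (L1 : ln (1 - beta * alpha ^ m) <= ln (1 - beta' * alpha' ^ m)) by (apply ln_le_h; lra).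
  assert (L2 : ln (1 - beta * alpha ^ m) <= 0) by (apply ln_nonpos; lra).
  assert (L3 : (1+eps) * ln alpha <= ln alpha').
  { rewrite <- ln_Rpower. apply ln_le_h; lra. }
  assert (L4 : (1+eps) * ln beta <= ln beta').
  { rewrite <- ln_Rpower. apply ln_le_h; lra. }
  assert (L5 : ln alpha <= 0) by (apply ln_nonpos; lra).
  assert (L6 : ln beta <= 0) by (apply ln_nonpos; lra).
  assert (Hm : 0 <= INR m) by apply pos_INR.
  assert (Hs : 0 <= INR s) by apply pos_INR.
  assert (X : INR m * ((1+eps) * ln alpha) <= INR m * ln alpha') by (apply Rmult_le_compat_l; lra).
  assert (Y : INR s * ((1+eps) * ln beta + INR m * ((1+eps) * ln alpha)) <= INR s * (ln beta' + INR m * ln alpha')) by (apply Rmult_le_compat_l; lra).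
  nra.
Qed.

Theorem lemma2 (n k : nat) (S L : nat -> nat) (gamma eps alpha beta alpha' beta' : R) :
  0 < gamma -> (0 < k)%nat -> 0 < eps -> level_seq n k L ->
  0 < alpha < 1 -> 0 < beta < 1 ->
  Rpower alpha (1 + eps) <= alpha' <= alpha ->
  Rpower beta (1 + eps) <= beta' <= beta ->
  score_geo n L S alpha' beta' gamma <= (1 + eps) * score_geo n L S alpha beta gamma.
Proof.
  intros Hg Hk He HL Ha Hb Ha' Hb'.
  unfold score_geo. apply sum_le.
  intros i Hi. apply in_seq in Hi.
  assert (Hn : 1 <= INR n).
  { replace 1 with (INR 1) by reflexivity. apply le_INR. lia. }
  assert (Hln : 0 <= ln (INR n)) by (rewrite <- ln_1; apply ln_le_h; lra).
  assert (Hp : 0 <= pen n gamma (lvl L (i - 1)) (lvl L i)).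
  { unfold pen. apply Rmult_le_pos; [apply Rmult_le_pos|]; try lra. apply Rmax_r. }
  assert (T := term_le (S i) (lvl L i) eps alpha beta alpha' beta' He Ha Hb Ha' Hb').
  nra.
Qed.
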